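(* Let $J$ be a finite poset on $\{1,\dots,n\}$, $p\in\{1,\dots,n\}$, and let $J_p\subseteq J$ be an inward or outward $p$-anchored path of $J$. Then $J$ and $\delta_{J_p}J$ are strongly Gram $\mathbb Z$-congruent, i.e. there is $B\in GL(n,\mathbb Z)$ with $C_J=B^{tr}C_{\delta_{J_p}J}B$. In particular, $J$ is non-negative of corank $r\ge0$ if and only if $\delta_{J_p}J$ is non-negative of corank $r$.
   Context: For a finite poset $I$ on $\{1,\dots,n\}$: $C_I=[c_{ij}]$ with $c_{ij}=1$ iff $i\preceq_I j$ (else $0$); $G_I=\tfrac12(C_I+C_I^{tr})$; $I$ is non-negative of corank $r$ if $G_I$ is positive semi-definite of rank $n-r$. $\mathcal H(I)$ is the Hasse digraph (arrow $i\to j$ iff $i\prec_I j$ with no element strictly between). $GL(n,\mathbb Z)$ is the set of integer matrices with determinant $\pm1$. A subset $J_p\subseteq J$ with $p\in J_p$ is a $p$-anchored path if: the digraph $\mathcal H(J)$ with vertex $p$ deleted is disconnected, $J_p\setminus\{p\}$ is the vertex set of one of its connected components (so the vertices of $J_p\setminus\{p\}$ are adjacent in $\mathcal H(J)$ only to vertices of $J_p$), the subdigraph of $\mathcal H(J)$ induced on $J_p$ has a path as underlying graph, and $p$ has degree $1$ in it. It is inward (resp. outward) if $p$ is the unique maximal (resp. minimal) element of $J_p$ with the induced order. For such $J_p$, $\delta_{J_p}J$ is the poset on $\{1,\dots,n\}$ whose Hasse digraph is obtained from $\mathcal H(J)$ by reversing all arrows between vertices of $J_p$. *)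

(* Defs.v *)
From HB Require Import structures.
From mathcomp Require Import all_boot all_order all_algebra.
Set Implicit Arguments. Unset Strict Implicit. Unset Printing Implicit Defensive.
Import Order.TTheory GRing.Theory Num.Theory.
Local Open Scope ring_scope.

(* A finite poset on {1,...,n} is represented on 'I_n by its (boolean)
   relation  le i j  <->  i <=_I j. *)
Definition is_poset (n : nat) (le : rel 'I_n) : Prop :=
  [/\ reflexive le, antisymmetric le & transitive le].

Definition Cmx (R : nzRingType) (n : nat) (le : rel 'I_n) : 'M[R]_n :=
  \matrix_(i, j) (le i j)%:R.

Definition Gmx (R : realFieldType) (n : nat) (le : rel 'I_n) : 'M[R]_n :=
  2^-1 *: (Cmx R le + (Cmx R le)^T).

Definition psd (R : realFieldType) (n : nat) (G : 'M[R]_n) : Prop :=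
  forall v : 'cV[R]_n, 0 <= (v^T *m G *m v) 0 0.

Definition nonneg_corank (R : realFieldType) (n : nat) (le : rel 'I_n)
    (r : nat) : Prop :=
  psd (Gmx R le) /\ (\rank (Gmx R le) + r)%N = n.

Definition hasse (n : nat) (le : rel 'I_n) : rel 'I_n :=
  fun i j => [&& i != j, le i j &
     [forall k, ~~ [&& k != i, k != j, le i k & le k j]]].

Definition hadj (n : nat) (le : rel 'I_n) : rel 'I_n :=
  fun i j => hasse le i j || hasse le j i.

Definition hadj_del (n : nat) (le : rel 'I_n) (p : 'I_n) : rel 'I_n :=
  fun i j => [&& hadj le i j, i != p & j != p].

Definition consec (T : eqType) (s : seq T) (x y : T) : bool :=
  ((x, y) \in zip s (behead s)) || ((y, x) \in zip s (behead s)).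

Definition anchored_path (n : nat) (le : rel 'I_n) (p : 'I_n)
    (Jp : {set 'I_n}) : Prop :=
  [/\ p \in Jp,
      (exists x y, [/\ x != p, y != p & ~~ connect (hadj_del le p) x y]),
      (exists2 x, x \in Jp :\ p &
         Jp :\ p = [set y | (y != p) && connect (hadj_del le p) x y]),
      (* the induced subdigraph on Jp has a path as underlying graph *)
      (exists s : seq 'I_n, [/\ uniq s, (forall x, (x \in s) = (x \in Jp)) &
         forall x y, x \in Jp -> y \in Jp -> hadj le x y = consec s x y]) &
      #|[set y in Jp | hadj le p y]| = 1%N].

Definition maximal_in (n : nat) (le : rel 'I_n) (A : {set 'I_n}) (x : 'I_n) :=
  x \in A /\ forall y, y \in A -> le x y -> y = x.
Definition minimal_in (n : nat) (le : rel 'I_n) (A : {set 'I_n}) (x : 'I_n) :=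
  x \in A /\ forall y, y \in A -> le y x -> y = x.

Definition inward_anchored_path (n : nat) (le : rel 'I_n) (p : 'I_n)
    (Jp : {set 'I_n}) : Prop :=
  anchored_path le p Jp /\ maximal_in le Jp p /\
  forall x, maximal_in le Jp x -> x = p.

Definition outward_anchored_path (n : nat) (le : rel 'I_n) (p : 'I_n)
    (Jp : {set 'I_n}) : Prop :=
  anchored_path le p Jp /\ minimal_in le Jp p /\
  forall x, minimal_in le Jp x -> x = p.

Definition hasse_flip (n : nat) (le : rel 'I_n) (Jp : {set 'I_n}) : rel 'I_n :=
  fun i j => if (i \in Jp) && (j \in Jp) then hasse le j i else hasse le i j.

(* delta_{Jp} J : the poset whose Hasse digraph is hasse_flip, i.e. the
   reflexive-transitive closure of that digraph. *)
Definition delta (n : nat) (le : rel 'I_n) (Jp : {set 'I_n}) : rel 'I_n :=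
  connect (hasse_flip le Jp).

(* Main.v *)
Require Import Defs.
From HB Require Import structures.
From mathcomp Require Import all_boot all_order all_algebra.
From mathcomp Require Import zify.
Set Implicit Arguments. Unset Strict Implicit. Unset Printing Implicit Defensive.
Import Order.TTheory GRing.Theory Num.Theory.

Section Graph.
Variable T : finType.
Implicit Types (Y S : {set T}) (e : rel T) (x y u v : T).

Definition rin (Y : {set T}) (e : rel T) : rel T :=
  fun u v => [&& u \in Y, v \in Y & e u v].

Lemma rin_sub Y e x y : connect (rin Y e) x y -> connect e x y.
Proof.
apply: connect_sub => u v /and3P[_ _ h]; exact: connect1.
Qed.

Lemma fwd_mem Y e x y : (forall u v, u \in Y -> e u v -> v \in Y) ->
  x \in Y -> connect e x y -> y \in Y.
Proof.
move=> cl xY /connectP[s ps ->]; elim: s x xY ps => [|z s IH] x xY //=.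
case/andP=> exz pz; exact: IH (cl _ _ xY exz) pz.
Qed.

Lemma restrict_fwd Y e x y : (forall u v, u \in Y -> e u v -> v \in Y) ->
  x \in Y -> connect e x y -> connect (rin Y e) x y.
Proof.
move=> cl xY /connectP[s ps ->]; elim: s x xY ps => [|z s IH] x xY /=.
  by rewrite connect0.
case/andP=> exz pz; have zY := cl _ _ xY exz.
apply: connect_trans (connect1 _) (IH _ zY pz); by rewrite /rin xY zY.
Qed.

Lemma rin_src Y e x y : connect (rin Y e) x y -> y \in Y -> x \in Y.
Proof.
case/connectP=> [[|z s]] /=; first by move=> _ ->.
by case/andP=> /and3P[].
Qed.

Lemma restrict_bwd Y e x y : (forall u v, u \notin Y -> e u v -> v \notin Y) ->
  y \in Y -> connect e x y -> connect (rin Y e) x y.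
Proof.
move=> cl yY /connectP[s ps ey]; elim: s x ps ey => [|z s IH] x /=.
  by move=> _ ->; rewrite connect0.
case/andP=> exz pz ey; have cz := IH _ pz ey.
have zY := rin_src cz yY.
have xY : x \in Y by apply: contraLR zY => /cl; apply.
apply: connect_trans (connect1 _) cz; by rewrite /rin xY zY.
Qed.

Lemma exit_lemma (S : {set T}) e x y : connect e x y -> x \in S -> y \notin S ->
  exists u v, [/\ u \in S, v \notin S, e u v, connect e x u & connect e v y].
Proof.
case/connectP=> s ps ->; elim: s x ps => [|z s IH] x /=; first by move=> _ ->.
case/andP=> exz pz xS yS.
case zS: (z \in S).
  have [u [v [uS vS euv czu cvy]]] := IH _ pz zS yS.
  exists u, v; split => //; exact: connect_trans (connect1 exz) czu.
exists x, z; split.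
- exact: xS.
- by rewrite zS.
- exact: exz.
- exact: connect0.
- by apply/connectP; exists s.
Qed.

End Graph.

Section Poset.
Variables (n : nat) (J : rel 'I_n).
Hypothesis HJ : is_poset J.

Lemma hasse_le x y : hasse J x y -> J x y.
Proof. by case/and3P. Qed.

Lemma hasse_neq x y : hasse J x y -> x != y.
Proof. by case/and3P. Qed.

Lemma connect_hasse_le x y : connect (hasse J) x y -> J x y.
Proof.
case: HJ => refl anti tr.
case/connectP=> s ps ->; elim: s x ps => [|z s IH] x /=; first by rewrite refl.
case/andP=> /hasse_le h /IH; exact: tr.
Qed.

Lemma le_connect_hasse x y : J x y -> connect (hasse J) x y.
Proof.
case: HJ => refl anti tr.
suff H: forall N x y, #|[set z | J x z && J z y]| <= N -> J x y ->
   connect (hasse J) x y by apply: (H _ x y (leqnn _)).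
elim=> [|N IH] {}x {}y c Jxy.
  move: c; rewrite leqn0 => /eqP/cards0_eq/setP/(_ x).
  by rewrite !inE refl Jxy.
case: (eqVneq x y) => [->|nxy]; first exact: connect0.
case hxy: (hasse J x y); first exact: connect1.
move: hxy; rewrite /hasse nxy Jxy /= => /negbT/forallPn [k].
rewrite negbK => /and4P [nkx nky Jxk Jky].
apply: (@connect_trans _ _ k); apply: IH => //.
- rewrite -ltnS; apply: leq_trans c; apply: proper_card; apply/properP; split.
    apply/subsetP=> z; rewrite !inE => /andP[Jxz Jzk].
    by rewrite Jxz (tr _ _ _ Jzk Jky).
  exists y; rewrite !inE ?Jxy ?refl //=.
  apply/negP => Jyk; move: nky; rewrite (anti y k) ?eqxx //.
  by rewrite Jyk Jky.
- rewrite -ltnS; apply: leq_trans c; apply: proper_card; apply/properP; split.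
    apply/subsetP=> z; rewrite !inE => /andP[Jkz Jzy].
    by rewrite Jzy (tr _ _ _ Jxk Jkz).
  exists x; rewrite !inE ?Jxy ?refl //=.
  apply/negP => /andP[Jkx _]; move: nkx; rewrite (anti k x) ?eqxx //.
  by rewrite Jkx Jxk.
Qed.

Lemma le_hasseE x y : J x y = connect (hasse J) x y.
Proof. by apply/idP/idP; [apply: le_connect_hasse | apply: connect_hasse_le]. Qed.

End Poset.

Lemma connect_conv (T : finType) (e : rel T) x y :
  connect (fun u v => e v u) x y = connect e y x.
Proof. by have := connect_rev e x y. Qed.

Section Inward.
Variables (n : nat) (J : rel 'I_n) (p : 'I_n) (Jp : {set 'I_n}).
Hypothesis HJ : is_poset J.
Hypothesis pJ : p \in Jp.
Local Notation A := (Jp :\ p).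
Hypothesis closure : forall a y, a \in A -> hadj J a y -> y \in Jp.
Hypothesis Mx : forall a, a \in A -> J a p.

Local Notation H := (hasse J).
Local Notation F := (hasse_flip J Jp).

Lemma inA_neq a : a \in A -> a != p.
Proof. by rewrite !inE => /andP[]. Qed.
Lemma inA_Jp a : a \in A -> a \in Jp.
Proof. by rewrite !inE => /andP[]. Qed.
Lemma Jp_notA v : v \in Jp -> v \notin A -> v = p.
Proof. by rewrite !inE => -> ; rewrite andbT negbK => /eqP. Qed.

Lemma F1 a : a \in A -> ~~ J p a.
Proof.
move=> aA; apply/negP => Jpa; case: HJ => _ anti _.
by move: (inA_neq aA); rewrite (anti a p) ?eqxx // Mx.
Qed.

Lemma F5 u v : u \in Jp -> v \in Jp -> F u v = H v u.
Proof. by move=> uJ vJ; rewrite /hasse_flip uJ vJ. Qed.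

Lemma F2 a v : a \in A -> F a v -> v \in A.
Proof.
move=> aA; rewrite /hasse_flip (inA_Jp aA) /=.
case vJ: (v \in Jp).
  move=> Hva; rewrite !inE vJ andbT; apply/negP => /eqP vp.
  by move: (F1 aA); rewrite -vp (hasse_le Hva).
move=> Hav; have := closure aA (_ : hadj J a v); rewrite vJ.
by move/(_ (introT orP (or_introl Hav))).
Qed.

Lemma F3 u v : u \notin A -> H u v -> v \notin A.
Proof.
move=> uA Huv; apply/negP => vA.
have uJ : u \in Jp by apply: (closure vA); rewrite /hadj Huv orbT.
by move: (F1 vA); rewrite -(Jp_notA uJ uA) (hasse_le Huv).
Qed.

Lemma F4 u v : u \notin A -> v \notin A -> F u v = H u v.
Proof.
move=> uA vA; rewrite /hasse_flip.
case uJ: (u \in Jp); case vJ: (v \in Jp) => //=.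
by rewrite (Jp_notA uJ uA) (Jp_notA vJ vA) /hasse eqxx.
Qed.

Lemma J_xa x a : x \notin A -> a \in A -> J x a = false.
Proof.
move=> xA aA; apply/negP; rewrite (le_hasseE HJ) => c.
have cl : forall u v, u \in ~: A -> H u v -> v \in ~: A.
  by move=> u v; rewrite !in_setC; exact: F3.
have xA' : x \in ~: A by rewrite in_setC.
by move: (fwd_mem cl xA' c); rewrite in_setC aA.
Qed.

Lemma J_ax x a : x \notin A -> a \in A -> J a x = J p x.
Proof.
move=> xA aA; case: (HJ) => refl anti tr; apply/idP/idP; last first.
  by apply: tr; apply: Mx.
rewrite !(le_hasseE HJ) => c.
have [u [v [uA vA Huv _ cvx]]] := exit_lemma c aA xA.
have vJ : v \in Jp by apply: (closure uA); rewrite /hadj Huv.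
by rewrite -(Jp_notA vJ vA).
Qed.

Lemma eqF_H_out : rin (~: A) F =2 rin (~: A) H.
Proof.
move=> u v; rewrite /rin !in_setC.
by case uA: (u \in A); case vA: (v \in A) => //=; rewrite F4 ?uA ?vA.
Qed.

Lemma D_nn x y : x \notin A -> y \notin A -> delta J Jp x y = J x y.
Proof.
move=> xA yA; rewrite /delta (le_hasseE HJ); apply/idP/idP => c.
  have cl : forall u v, u \notin ~: A -> F u v -> v \notin ~: A.
    by move=> u v; rewrite !in_setC !negbK; exact: F2.
  have yA' : y \in ~: A by rewrite in_setC.
  have c2 := restrict_bwd cl yA' c.
  rewrite (eq_connect eqF_H_out) in c2; exact: rin_sub c2.
have cl : forall u v, u \in ~: A -> H u v -> v \in ~: A.
  by move=> u v; rewrite !in_setC; exact: F3.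
have xA' : x \in ~: A by rewrite in_setC.
have c2 := restrict_fwd cl xA' c.
rewrite -(eq_connect eqF_H_out) in c2; exact: rin_sub c2.
Qed.

Lemma D_pa a : a \in A -> delta J Jp p a.
Proof.
move=> aA; have := Mx aA; rewrite (le_hasseE HJ) => c.
have pA : p \notin A by rewrite !inE eqxx.
have [u [v [uA vA Huv cau _]]] := exit_lemma c aA pA.
have vJ : v \in Jp by apply: (closure uA); rewrite /hadj Huv.
move: Huv; rewrite (Jp_notA vJ vA) => Hup.
have c2 := restrict_bwd (Y := A) (fun u v => @F3 u v) uA cau.
apply: (@connect_trans _ _ u).
  by apply: connect1; rewrite F5 // inA_Jp.
rewrite -connect_conv in c2; apply: connect_sub c2 => x y /and3P[yA xA Hyx].
by apply: connect1; rewrite F5 ?inA_Jp.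
Qed.

Lemma D_ax a x : a \in A -> x \notin A -> delta J Jp a x = false.
Proof.
move=> aA xA; apply/negP => c; move: xA; rewrite (fwd_mem _ aA c) //.
exact: F2.
Qed.

Lemma D_xa x a : x \notin A -> a \in A -> delta J Jp x a = delta J Jp x p.
Proof.
move=> xA aA; apply/idP/idP => c; last first.
  exact: connect_trans c (D_pa aA).
have xA' : x \in ~: A by rewrite inE.
have aA' : a \notin ~: A by rewrite inE negbK.
have [u [v [uA vA Fuv cxu _]]] := exit_lemma c xA' aA'.
rewrite inE in uA; rewrite inE negbK in vA.
case uJ: (u \in Jp); first by rewrite -(Jp_notA uJ uA).
move: Fuv; rewrite /hasse_flip uJ /= => Huv.
by move: uJ; rewrite (closure vA) // /hadj Huv orbT.
Qed.

Lemma D_ab a b : a \in A -> b \in A -> delta J Jp a b = J b a.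
Proof.
move=> aA bA; rewrite /delta (le_hasseE HJ); apply/idP/idP => c.
  have c2 := restrict_fwd (fun u v => @F2 u v) aA c.
  apply: (@rin_sub _ A); rewrite -connect_conv.
  apply: connect_sub c2 => x y /and3P[xA yA Fxy]; apply: connect1.
  by rewrite /rin xA yA -F5 ?inA_Jp.
have c2 := restrict_bwd (Y := A) (fun u v => @F3 u v) aA c.
rewrite -connect_conv in c2; apply: connect_sub c2 => x y /and3P[yA xA Hyx].
by apply: connect1; rewrite F5 ?inA_Jp.
Qed.

End Inward.

Section Part_P3.
Local Open Scope ring_scope.


Section Mx.
Variables (n : nat) (A : {set 'I_n}) (p : 'I_n) (s : 'I_n -> 'I_n).

Definition Bm : 'M[int]_n :=
  \matrix_(i, j) (if j \in A then (i == p)%:R - (i == s j)%:R else (i == j)%:R).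

Lemma sum_delta (F : 'I_n -> int) x : \sum_u F u * (u == x)%:R = F x.
Proof.
rewrite (bigD1 x) //= eqxx mulr1 big1 ?addr0 // => u /negbTE ->.
by rewrite mulr0.
Qed.

Lemma colsum (F : 'I_n -> int) j :
  \sum_u F u * Bm u j = if j \in A then F p - F (s j) else F j.
Proof.
under eq_bigr => u _ do rewrite mxE.
case: (j \in A); last exact: sum_delta.
under eq_bigr => u _ do rewrite mulrBr.
by rewrite sumrB !sum_delta.
Qed.

Hypothesis pA : p \notin A.
Hypothesis sA : forall a, a \in A -> s a \in A.
Hypothesis ss : forall a, a \in A -> s (s a) = a.

Lemma Bm_invol : Bm *m Bm = 1.
Proof.
apply/matrixP => i j; rewrite mxE colsum !mxE (negbTE pA).
case jA: (j \in A); last by [].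
rewrite sA // ss //; by rewrite opprB addrC subrK.
Qed.

Lemma Bm_det : \det Bm = 1 \/ \det Bm = -1.
Proof.
have : \det Bm ^+ 2 = 1 by rewrite expr2 -det_mulmx Bm_invol det1.
by move/eqP; rewrite sqrf_eq1 => /orP[] /eqP; [left|right].
Qed.

Variables (J D : rel 'I_n).
Hypothesis H1 : forall x y, x \notin A -> y \notin A -> D x y = J x y.
Hypothesis H2 : forall a x, a \in A -> x \notin A ->
  (D x p)%:R - (D x (s a))%:R = (J x a)%:R :> int.
Hypothesis H3 : forall a x, a \in A -> x \notin A ->
  (D p x)%:R - (D (s a) x)%:R = (J a x)%:R :> int.
Hypothesis H4 : forall a b, a \in A -> b \in A ->
  (D p p)%:R - (D (s a) p)%:R - ((D p (s b))%:R - (D (s a) (s b))%:R)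
    = (J a b)%:R :> int.

Lemma Bm_cong : Cmx int J = Bm^T *m Cmx int D *m Bm.
Proof.
apply/matrixP => i j; rewrite mxE [RHS]mxE colsum.
have inner : forall v, (Bm^T *m Cmx int D) i v =
    if i \in A then (D p v)%:R - (D (s i) v)%:R else (D i v)%:R.
  move=> v; rewrite mxE.
  under eq_bigr => u _ do rewrite mxE mulrC [Cmx _ _ _ _]mxE.
  rewrite colsum.
  by case: (i \in A).
rewrite !inner.
case iA: (i \in A); case jA: (j \in A).
- exact: esym (H4 iA jA).
- exact: esym (H3 iA (negbT jA)).
- exact: esym (H2 jA (negbT iA)).
- by rewrite H1 ?iA ?jA.
Qed.

End Mx.

End Part_P3.

Lemma chain_rev n (J : rel 'I_n) (A : {set 'I_n}) :
  is_poset J -> {in A &, total J} ->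
  exists s : 'I_n -> 'I_n, [/\ forall a, a \in A -> s a \in A,
     forall a, a \in A -> s (s a) = a &
     forall a b, a \in A -> b \in A -> J a b = J (s b) (s a)].
Proof.
case=> refl anti tr tot.
set l := sort J (enum A).
have srt : sorted J l.
  apply: (sort_sorted_in (P := mem A)) => //; apply/allP => x; by rewrite mem_enum.
have meml : forall x, (x \in l) = (x \in A) by move=> x; rewrite mem_sort mem_enum.
have ul : uniq l by rewrite sort_uniq enum_uniq.
set K := size l.
have key : forall x0 i j, i < K -> j < K -> J (nth x0 l i) (nth x0 l j) = (i <= j).
  move=> x0 i j iK jK; apply/idP/idP; last first.
    by move=> ij; apply: (sorted_leq_nth tr refl x0 srt).
  move=> Jij; rewrite leqNgt; apply/negP => ji.
  have Jji : J (nth x0 l j) (nth x0 l i).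
    by apply: (sorted_leq_nth tr refl x0 srt) => //; apply: ltnW.
  have := anti _ _ (introT andP (conj Jij Jji)).
  move/eqP; rewrite nth_uniq // => /eqP eij; by move: ji; rewrite eij ltnn.
pose s a := if a \in A then nth a l (K.-1 - index a l) else a.
have idxK : forall a, a \in A -> index a l < K by move=> a; rewrite index_mem meml.
have sA : forall a, a \in A -> s a \in A.
  move=> a aA; rewrite /s aA -meml mem_nth //; have := idxK a aA.
  rewrite -/K -!subn1; lia.
have idx_s : forall a, a \in A -> index (s a) l = K.-1 - index a l.
  move=> a aA; rewrite /s aA index_uniq //; have := idxK a aA; rewrite -/K -!subn1; lia.
have nthK : forall a (y0 : 'I_n), a \in A -> nth y0 l (index a l) = a.
  by move=> a y0 aA; rewrite nth_index // meml.
exists s; split => //.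
  move=> a aA; rewrite {1}/s sA // idx_s //.
  have iK := idxK a aA.
  have -> : K.-1 - (K.-1 - index a l) = index a l by rewrite -!subn1; lia.
  by rewrite nthK.
move=> a b aA bA.
rewrite -{1}(nthK a a aA) -{1}(nthK b a bA) key ?idxK //.
rewrite -{1}(nthK (s b) a (sA _ bA)) -{1}(nthK (s a) a (sA _ aA)) key ?idxK ?sA //.
rewrite !idx_s //; have := idxK a aA; have := idxK b bA.
move=> hb ha; rewrite -!subn1; apply/idP/idP; lia.
Qed.

Lemma zip_nth (T : eqType) (s : seq T) x0 i j : uniq s -> i < size s -> j < size s ->
  ((nth x0 s i, nth x0 s j) \in zip s (behead s)) = (j == i.+1).
Proof.
move=> us iS jS; apply/idP/idP.
  case/(nthP (x0, x0)) => m; rewrite size_zip size_behead => mlt.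
  rewrite nth_zip_cond size_zip size_behead mlt nth_behead /= => [[e1 e2]].
  have m1 : m.+1 < size s by move: mlt; rewrite -subn1; lia.
  have m0 : m < size s by lia.
  move/eqP: e1; rewrite nth_uniq // => /eqP <-.
  by move/eqP: e2; rewrite nth_uniq // eq_sym.
move/eqP => ji; apply/(nthP (x0, x0)); exists i.
  by rewrite size_zip size_behead -subn1; lia.
rewrite nth_zip_cond size_zip size_behead.
have -> : i < minn (size s) (size s).-1 by rewrite -subn1; lia.
by rewrite nth_behead ji.
Qed.

Lemma consec_nth (T : eqType) (s : seq T) x0 i j : uniq s -> i < size s -> j < size s ->
  consec s (nth x0 s i) (nth x0 s j) = (j == i.+1) || (i == j.+1).
Proof. by move=> us iS jS; rewrite /consec !zip_nth. Qed.

Section Struct.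
Variables (n : nat) (J : rel 'I_n) (p : 'I_n) (Jp : {set 'I_n}).
Hypothesis HJ : is_poset J.
Hypothesis pJ : p \in Jp.
Local Notation A := (Jp :\ p).
Hypothesis Hclos : forall a y, a \in A -> hadj J a y -> y \in Jp.
Hypothesis Hpath : exists s : seq 'I_n, [/\ uniq s, (forall x, (x \in s) = (x \in Jp)) &
         forall x y, x \in Jp -> y \in Jp -> hadj J x y = consec s x y].
Hypothesis Hdeg : #|[set y in Jp | hadj J p y]| = 1%N.
Hypothesis Huniq : forall x, maximal_in J Jp x -> x = p.

Lemma exists_max a : a \in Jp -> exists m, maximal_in J Jp m /\ J a m.
Proof.
case: HJ => refl anti tr.
suff H : forall N a, #|[set y in Jp | J a y]| <= N -> a \in Jp ->
   exists m, maximal_in J Jp m /\ J a m by apply: H (leqnn _).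
elim=> [|N IH] {}a c aJ.
  by move: c; rewrite leqn0 => /eqP/cards0_eq/setP/(_ a); rewrite !inE aJ refl.
case: (boolP [exists y, [&& y \in Jp, J a y & y != a]]).
  case/existsP => y /and3P[yJ Jay nya].
  have [m [mm Jym]] : exists m, maximal_in J Jp m /\ J y m.
    apply: IH yJ; rewrite -ltnS; apply: leq_trans c; apply: proper_card.
    apply/properP; split.
      apply/subsetP => z; rewrite !inE => /andP[-> Jyz]; exact: tr Jay Jyz.
    exists a; rewrite !inE ?aJ ?refl //=.
    apply/negP => Jya; move: nya; rewrite (anti y a) ?eqxx //.
    by rewrite Jya Jay.
  by exists m; split => //; exact: tr Jay Jym.
move/existsPn => nomore; exists a; split => //; split => // y yJ Jay.
by apply/eqP; move: (nomore y); rewrite yJ Jay /= negbK.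
Qed.

Lemma Mx a : a \in A -> J a p.
Proof.
move=> aA; have aJ : a \in Jp by move: aA; rewrite !inE => /andP[].
by have [m [mm Jam]] := exists_max aJ; rewrite -(Huniq mm).
Qed.

Lemma up_cover x y : J x y -> x != y -> exists c, hasse J x c.
Proof.
move/(le_connect_hasse HJ) => /connectP[[|c s] /= ps ey]; first by rewrite ey eqxx.
by exists c; case/andP: ps.
Qed.

Lemma Tot x y : x \in Jp -> y \in Jp -> J x y || J y x.
Proof.
case: (HJ) => refl anti tr.
have [s [us ms hs]] := Hpath.
pose K := size s.
pose v i := nth p s i.
have vJ : forall i, i < K -> v i \in Jp by move=> i iK; rewrite -ms mem_nth.
have vadj : forall i j, i < K -> j < K ->
    hadj J (v i) (v j) = (j == i.+1) || (i == j.+1).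
  by move=> i j iK jK; rewrite hs ?vJ // consec_nth.
have vinj : forall i j, i < K -> j < K -> (v i == v j) = (i == j).
  by move=> i j iK jK; rewrite nth_uniq.
have vsurj : forall x, x \in Jp -> index x s < K /\ v (index x s) = x.
  by move=> z zJ; rewrite /v nth_index ?ms // index_mem ms.
have [qK vq] := vsurj p pJ.
move: (index p s) qK vq => q qK vq.
clearbody v K.
have qend : (q == 0) || (q == K.-1).
  apply/negPn/negP => /norP[q0 qK1].
  have h1 : v q.-1 \in [set y in Jp | hadj J p y].
    rewrite inE vJ /=; last by lia.
    rewrite -{1}vq vadj; [|lia|lia].
    by apply/orP; right; apply/eqP; lia.
  have h2 : v q.+1 \in [set y in Jp | hadj J p y].
    rewrite inE vJ /=; last by lia.
    rewrite -{1}vq vadj; [|lia|lia].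
    by apply/orP; left.
  have : #|[set v q.-1; v q.+1]| <= 1.
    rewrite -Hdeg; apply: subset_leq_card; apply/subsetP => z.
    by case/set2P => ->.
  rewrite cards2 vinj; [|lia|lia].
  have -> : (q.-1 == q.+1) = false by apply/eqP; lia.
  by [].
have K0 : 0 < K by lia.
pose w i := v (if q == 0 then i else K.-1 - i).
have wJ : forall i, i < K -> w i \in Jp.
  by move=> i iK; rewrite /w; case: ifP => _; apply: vJ; lia.
have wadj : forall i j, i < K -> j < K ->
    hadj J (w i) (w j) = (j == i.+1) || (i == j.+1).
  move=> i j iK jK; rewrite /w; case: ifP => _; first exact: vadj.
  rewrite vadj; [|lia|lia].
  have -> : (K.-1 - j == (K.-1 - i).+1) = (i == j.+1) by apply/eqP/eqP; lia.
  have -> : (K.-1 - i == (K.-1 - j).+1) = (j == i.+1) by apply/eqP/eqP; lia.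
  by rewrite orbC.
have winj : forall i j, i < K -> j < K -> (w i == w j) = (i == j).
  move=> i j iK jK; rewrite /w; case: ifP => _; first exact: vinj.
  rewrite vinj; [|lia|lia]; by apply/eqP/eqP; lia.
have wsurj : forall x, x \in Jp -> exists2 i, i < K & w i = x.
  move=> z zJ; have [iK vi] := vsurj z zJ.
  case q0: (q == 0).
    by exists (index z s) => //; rewrite /w q0.
  exists (K.-1 - index z s); first by lia.
  rewrite /w q0; have -> : K.-1 - (K.-1 - index z s) = index z s by lia.
  exact: vi.
have w0 : w 0 = p.
  rewrite /w; case: ifP => [/eqP q0|q0]; first by rewrite -q0 vq.
  move: qend; rewrite q0 /= => /eqP qK'.
  by rewrite subn0 -qK' vq.
have hasse_anti : forall a b, hasse J a b -> hasse J b a -> False.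
  move=> a b /[dup] hab /hasse_le Jab /hasse_le Jba.
  by move: (hasse_neq hab); rewrite (anti a b) ?eqxx // Jab Jba.
have orient : forall i, i.+1 < K -> hasse J (w i.+1) (w i).
  move=> i0 i0K; apply/negPn/negP => nh0.
  pose P i := (i.+1 < K) && ~~ hasse J (w i.+1) (w i).
  have exP : exists i, P i by exists i0; rewrite /P i0K nh0.
  have ubP : forall i, P i -> i <= K by move=> i /andP[h _]; lia.
  case: (ex_maxnP exP ubP) => m /andP[mK nhm] maxm.
  have hm : hasse J (w m) (w m.+1).
    move: (wadj m m.+1 (ltnW mK) mK).
    rewrite eqxx /= /hadj (negbTE nhm) orbF => h; exact: h.
  have wm1A : w m.+1 \in A.
    by rewrite !inE wJ // andbT -w0 winj.
  have wm1p : w m.+1 != p by rewrite -w0 winj.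
  have [c hc] := up_cover (Mx wm1A) wm1p.
  have cJ : c \in Jp by apply: (Hclos wm1A); rewrite /hadj hc.
  have [j jK wj] := wsurj c cJ; rewrite -wj in hc.
  move: (wadj m.+1 j mK jK); rewrite /hadj hc /= => /esym /orP[] /eqP ej.
    have h2 : hasse J (w m.+2) (w m.+1).
      apply/negPn/negP => nh2; have := maxm m.+1; rewrite /P nh2 andbT.
      by rewrite -ej jK ltnn => /(_ isT).
    by apply: (hasse_anti _ _ h2); rewrite -ej.
  have jm : j = m by case: ej.
  by rewrite jm in hc; rewrite hc in nhm.
have chain : forall d i, i + d < K -> J (w (i + d)) (w i).
  elim=> [|d IH] i idK; first by rewrite addn0 refl.
  apply: (tr (w (i + d))); last by apply: IH; lia.
  rewrite addnS; apply: hasse_le; apply: orient; lia.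
move=> xJ yJ; have [i iK <-] := wsurj x xJ; have [j jK <-] := wsurj y yJ.
case: (leqP i j) => ij.
  by rewrite -(subnKC ij) chain ?orbT // subnKC.
by rewrite -(subnKC (ltnW ij)) chain // subnKC //; apply: ltnW.
Qed.

End Struct.

Section Part_P6.
Local Open Scope ring_scope.


Definition Good n (J D : rel 'I_n) (A : {set 'I_n}) (p : 'I_n) (s : 'I_n -> 'I_n) : Prop :=
  [/\ p \notin A, (forall a, a \in A -> s a \in A), (forall a, a \in A -> s (s a) = a) &
  [/\ forall x y, x \notin A -> y \notin A -> D x y = J x y,
      forall a x, a \in A -> x \notin A ->
        (D x p)%:R - (D x (s a))%:R = (J x a)%:R :> int,
      forall a x, a \in A -> x \notin A ->
        (D p x)%:R - (D (s a) x)%:R = (J a x)%:R :> int &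
      forall a b, a \in A -> b \in A ->
        (D p p)%:R - (D (s a) p)%:R - ((D p (s b))%:R - (D (s a) (s b))%:R)
          = (J a b)%:R :> int]].

Lemma good_conc n (J D : rel 'I_n) A p s : Good J D A p s ->
  [/\ Cmx int J = (Bm A p s)^T *m Cmx int D *m Bm A p s,
      Bm A p s *m Bm A p s = 1 &
      \det (Bm A p s) = 1 \/ \det (Bm A p s) = -1].
Proof.
case=> pA sA ss [h1 h2 h3 h4]; split.
- exact: Bm_cong.
- exact: Bm_invol.
- exact: Bm_det.
Qed.

Lemma inward_good n (J : rel 'I_n) (p : 'I_n) (Jp : {set 'I_n}) :
  is_poset J -> p \in Jp ->
  (forall a y, a \in Jp :\ p -> hadj J a y -> y \in Jp) ->
  (exists s : seq 'I_n, [/\ uniq s, (forall x, (x \in s) = (x \in Jp)) &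
         forall x y, x \in Jp -> y \in Jp -> hadj J x y = consec s x y]) ->
  #|[set y in Jp | hadj J p y]| = 1%N ->
  (forall x, maximal_in J Jp x -> x = p) ->
  exists s, Good J (delta J Jp) (Jp :\ p) p s.
Proof.
move=> HJ pJ cl hp hd hu.
have mx : forall a, a \in Jp :\ p -> J a p by move=> a; exact: Mx HJ hu a.
have tot : {in Jp :\ p &, total J}.
  move=> x y; rewrite !inE => /andP[_ xJ] /andP[_ yJ]; exact: Tot HJ pJ cl hp hd hu x y xJ yJ.
have [s [sA ss sJ]] := chain_rev HJ tot.
have pA : p \notin Jp :\ p by rewrite !inE eqxx.
have refl : reflexive J by case: HJ.
exists s; rewrite /Good; split => //; split.
- by move=> x y xA yA; exact: (D_nn HJ cl mx xA yA).
- move=> a x aA xA.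
  rewrite (D_xa HJ pJ cl mx xA (sA _ aA)) (J_xa HJ cl mx xA aA).
  by rewrite subrr.
- move=> a x aA xA.
  rewrite (D_ax HJ cl mx (sA _ aA) xA) (J_ax HJ cl mx xA aA).
  by rewrite (D_nn HJ cl mx pA xA) subr0.
- move=> a b aA bA.
  rewrite (D_nn HJ cl mx pA pA) refl (D_ax HJ cl mx (sA _ aA) pA).
  rewrite (D_pa HJ pJ cl mx (sA _ bA)) (D_ab HJ cl mx (sA _ aA) (sA _ bA)) -sJ //.
  by rewrite subr0 opprB addrC subrK.
Qed.

End Part_P6.

Section Part_P7.
Local Open Scope ring_scope.


Lemma psd_cong (R : realFieldType) n (G : 'M[R]_n) (P : 'M[R]_n) :
  psd G -> psd (P^T *m G *m P).
Proof.
move=> h v; have := h (P *m v).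
by rewrite trmx_mul !mulmxA.
Qed.

Lemma rank_cong (R : realFieldType) n (G : 'M[R]_n) (P : 'M[R]_n) :
  (\rank (P^T *m G *m P) <= \rank G)%N.
Proof.
apply: leq_trans (mxrankM_maxl _ _) _; exact: mxrankM_maxr.
Qed.

Lemma Cmx_map (R : realFieldType) n (J : rel 'I_n) :
  Cmx R J = map_mx intr (Cmx int J).
Proof. by apply/matrixP => i j; rewrite !mxE; case: (J i j). Qed.

Lemma Gmx_cong (R : realFieldType) n (J D : rel 'I_n) (P : 'M[R]_n) :
  Cmx R J = P^T *m Cmx R D *m P -> Gmx R J = P^T *m Gmx R D *m P.
Proof.
move=> h; rewrite /Gmx h -scalemxAr -scalemxAl; congr (_ *: _).
by rewrite mulmxDr mulmxDl !trmx_mul trmxK !mulmxA.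
Qed.

Lemma corank_transfer n (J D : rel 'I_n) (B : 'M[int]_n) :
  Cmx int J = B^T *m Cmx int D *m B -> B *m B = 1 ->
  forall (R : realFieldType) (r : nat),
    nonneg_corank R J r <-> nonneg_corank R D r.
Proof.
move=> hc hi R r.
pose P : 'M[R]_n := map_mx intr B.
have c1 : Cmx R J = P^T *m Cmx R D *m P.
  by rewrite !Cmx_map hc !map_mxM map_trmx.
have PP : P *m P = 1 by rewrite -map_mxM hi map_mx1.
have c2 : Cmx R D = P^T *m Cmx R J *m P.
  rewrite c1 !mulmxA -trmx_mul PP -!mulmxA PP trmx1 mul1mx mulmx1 //.
have g1 := Gmx_cong c1; have g2 := Gmx_cong c2.
have req : \rank (Gmx R D) = \rank (Gmx R J).
  apply/eqP; rewrite eqn_leq; apply/andP; split; [rewrite g2 | rewrite g1];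
  exact: rank_cong.
rewrite /nonneg_corank req; split => -[ps rk]; split => //.
- by rewrite g2; apply: psd_cong.
- by rewrite g1; apply: psd_cong.
Qed.

End Part_P7.

Section Part_P8.
Local Open Scope ring_scope.


Lemma anchored_facts n (J : rel 'I_n) p Jp : anchored_path J p Jp ->
  [/\ p \in Jp,
      (forall a y, a \in Jp :\ p -> hadj J a y -> y \in Jp),
      (exists s : seq 'I_n, [/\ uniq s, (forall x, (x \in s) = (x \in Jp)) &
         forall x y, x \in Jp -> y \in Jp -> hadj J x y = consec s x y]) &
      #|[set y in Jp | hadj J p y]| = 1%N].
Proof.
case=> pJ _ [x0 x0A Aeq] hp hd; split => //.
move=> a y aA ha; case: (eqVneq y p) => [-> //|yp].
have : y \in Jp :\ p.
  move: aA; rewrite Aeq !inE yp /= => /andP[ap c].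
  apply: connect_trans c (connect1 _); by rewrite /hadj_del ha ap yp.
by rewrite inE => /andP[].
Qed.

Definition conv n (J : rel 'I_n) : rel 'I_n := fun x y => J y x.

Lemma poset_conv n (J : rel 'I_n) : is_poset J -> is_poset (conv J).
Proof.
case=> refl anti tr; split.
- by move=> x; exact: refl.
- by move=> x y; rewrite /conv andbC; apply: anti.
- by move=> y x z h1 h2; exact: tr h2 h1.
Qed.

Lemma hasse_conv n (J : rel 'I_n) x y : hasse (conv J) x y = hasse J y x.
Proof.
rewrite /hasse /conv eq_sym; congr (_ && (_ && _)).
apply: eq_forallb => k.
by case: (k != x); case: (k != y); case: (J k x); case: (J y k).
Qed.

Lemma hadj_conv n (J : rel 'I_n) x y : hadj (conv J) x y = hadj J x y.
Proof. by rewrite /hadj (hasse_conv J x y) (hasse_conv J y x) orbC. Qed.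

Lemma delta_conv n (J : rel 'I_n) Jp x y : delta (conv J) Jp x y = delta J Jp y x.
Proof.
rewrite /delta -(connect_conv (hasse_flip J Jp)); apply: eq_connect => u v.
by rewrite /hasse_flip (hasse_conv J u v) (hasse_conv J v u) andbC.
Qed.

Lemma good_conv n (J D D' : rel 'I_n) A p s :
  (forall x y, D' x y = D y x) -> Good (conv J) D' A p s -> Good J D A p s.
Proof.
move=> eD [pA sA ss [h1 h2 h3 h4]]; split => //; split.
- by move=> x y xA yA; have := h1 y x yA xA; rewrite eD.
- by move=> a x aA xA; have := h3 a x aA xA; rewrite !eD.
- by move=> a x aA xA; have := h2 a x aA xA; rewrite !eD.
- move=> a b aA bA; have := h4 b a bA aA; rewrite !eD /conv => <-.
  move: (D p p)%:R (D (s a) p)%:R (D p (s b))%:R (D (s a) (s b))%:R => x y z w; lia.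
Qed.

End Part_P8.

Local Open Scope ring_scope.

Theorem lemma3p3 (n : nat) (J : rel 'I_n) (p : 'I_n) (Jp : {set 'I_n}) :
  is_poset J ->
  inward_anchored_path J p Jp \/ outward_anchored_path J p Jp ->
  (exists B : 'M[int]_n,
      (\det B = 1 \/ \det B = -1) /\
      Cmx int J = B^T *m Cmx int (delta J Jp) *m B) /\
  (forall (R : realFieldType) (r : nat),
      nonneg_corank R J r <-> nonneg_corank R (delta J Jp) r).
Proof.
move=> HJ hio.
have [s gd] : exists s, Good J (delta J Jp) (Jp :\ p) p s.
  case: hio => [[ha [_ hu]] | [ha [_ hu]]]; have [pJ cl [l [ul ml hl]] hd] := anchored_facts ha.
    by apply: inward_good => //; exists l.
  have cl' : forall a y, a \in Jp :\ p -> hadj (conv J) a y -> y \in Jp.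
    by move=> a y aA; rewrite hadj_conv; apply: cl.
  have hp' : exists s : seq 'I_n, [/\ uniq s, (forall x, (x \in s) = (x \in Jp)) &
         forall x y, x \in Jp -> y \in Jp -> hadj (conv J) x y = consec s x y].
    by exists l; split => // x y xJ yJ; rewrite hadj_conv hl.
  have hd' : #|[set y in Jp | hadj (conv J) p y]| = 1%N.
    by rewrite -hd; apply: eq_card => y; rewrite !inE hadj_conv.
  have [s gs] := @inward_good n (conv J) p Jp (poset_conv HJ) pJ cl' hp' hd' hu.
  exists s; apply: good_conv gs => x y; exact: delta_conv.
have [hc hinv hdet] := good_conc gd.
split; first by exists (Bm (Jp :\ p) p s).
exact: corank_transfer hc hinv.
Qed.
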